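(* Let $s$ be a Lucasian GNS on a ring $D$. For all positive integers $m$ and $a,b\mid m$ with $a\mid b$ or $b\mid a$, one has $s(m)\equiv\frac m\ell\frac{s(a)s(b)}{s(g)}\bmod s(a)s(b)$, where $g=\gcd(a,b)$ and $\ell=\operatorname{lcm}(a,b)$.
   Context: A GNS over $D$ is $s\colon\mathbf N\to D$ with $s(0)=0$, $s(n)$ a non-zero-divisor for $n>0$, and $s(n-k)\mid s(n)-s(k)$ for $n>k>0$. It is Lucasian if $s(a+b)\equiv s(a)+s(b)\bmod s(a)s(b)$ for all $a,b$. *)

(* Defs.v *)
From mathcomp Require Import all_boot all_algebra.
Set Implicit Arguments. Unset Strict Implicit. Unset Printing Implicit Defensive.
Import GRing.Theory.
Local Open Scope ring_scope.

Definition nonzerodiv (D : comNzRingType) (x : D) : Prop :=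
  forall y : D, x * y = 0 -> y = 0.

Definition rdvd (D : comNzRingType) (a b : D) : Prop := exists c : D, b = c * a.

Definition congr_mod (D : comNzRingType) (x y c : D) : Prop := rdvd c (x - y).

Definition GNS (D : comNzRingType) (s : nat -> D) : Prop :=
  [/\ s 0%N = 0,
      (forall n, (0 < n)%N -> nonzerodiv (s n)) &
      (forall n k, (0 < k)%N -> (k < n)%N -> rdvd (s (n - k)%N) (s n - s k))].

Definition lucasian (D : comNzRingType) (s : nat -> D) : Prop :=
  GNS s /\ forall a b : nat, congr_mod (s (a + b)%N) (s a + s b) (s a * s b).

(* Main.v *)
Require Import Defs.
From mathcomp Require Import all_boot all_algebra.
From mathcomp Require Import ring.
Import GRing.Theory.
Local Open Scope ring_scope.

Lemma lucas_mult (D : comNzRingType) (s : nat -> D) (hs : lucasian s) (n j : nat) :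
  exists x : D, s (j * n)%N = j%:R * s n + x * (s n * s n).
Proof.
case: hs => [[s0 _ _] hl].
elim: j => [|j [x IH]].
  by exists 0; rewrite mul0n s0 mul0r mul0r addr0.
have [c Hc] := hl (j * n)%N n.
exists (x + c * j%:R + c * x * s n).
have -> : (j.+1 * n = j * n + n)%N by rewrite mulSn addnC.
have -> : s (j * n + n)%N = (s (j * n)%N + s n) + c * (s (j * n)%N * s n).
  by rewrite -Hc; ring.
rewrite IH -addn1 natrD; ring.
Qed.

Lemma helper (D : comNzRingType) (s : nat -> D) (hs : lucasian s)
  (m a b : nat) (bpos : (0 < b)%N) (hab : (a %| b)%N) (hbm : (b %| m)%N) :
  congr_mod (s m) ((m %/ b)%N%:R * s b) (s a * s b).
Proof.
case/dvdnP: hab => k' Hb.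
case/dvdnP: hbm => k ->.
rewrite mulnK //.
have [x Hx] := @lucas_mult _ _ hs b k.
have [y Hy] := @lucas_mult _ _ hs a k'.
rewrite -Hb in Hy.
exists (x * (k'%:R + y * s a)).
rewrite /congr_mod /rdvd; rewrite Hx; have -> : x * (s b * s b) = x * (k'%:R + y * s a) * (s a * s b) by rewrite {1}Hy; ring. ring.
Qed.

Theorem corollary5p13 (D : comNzRingType) (s : nat -> D) (hs : lucasian s)
  (m a b : nat) (hm : (0 < m)%N) (ha : (a %| m)%N) (hb : (b %| m)%N)
  (hab : (a %| b)%N \/ (b %| a)%N)
  (q : D) (hq : s (gcdn a b) * q = s a * s b) :
  congr_mod (s m) ((m %/ lcmn a b)%N%:R * q) (s a * s b).
Proof.
have apos : (0 < a)%N by apply: dvdn_gt0 ha.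
have bpos : (0 < b)%N by apply: dvdn_gt0 hb.
have [[_ hnz _] _] := hs.
case: hab => h.
- have Hg : gcdn a b = a by apply/gcdn_idPl.
  have Hl : lcmn a b = b by apply/lcmn_idPr.
  rewrite Hg in hq; rewrite Hl.
  have -> : q = s b.
    apply/eqP; rewrite -subr_eq0; apply/eqP; apply: (hnz a apos).
    by rewrite mulrBr hq subrr.
  exact: (@helper _ _ hs m a b bpos h hb).
- have Hg : gcdn a b = b by apply/gcdn_idPr.
  have Hl : lcmn a b = a by apply/lcmn_idPl.
  rewrite Hg in hq; rewrite Hl.
  have -> : q = s a.
    apply/eqP; rewrite -subr_eq0; apply/eqP; apply: (hnz b bpos).
    by rewrite mulrBr hq mulrC subrr.
  rewrite [s a * s b]mulrC; exact: (@helper _ _ hs m b a apos h ha).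
Qed.
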